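(* Let $G$ be a connected graph with $\lambda_{2}(D(G))\leq\frac{17-\sqrt{329}}{2}$. Then $G$ contains none of the following graphs as an induced subgraph: the cycle $C_{4}$, the cycle $C_{5}$, the path $P_{5}$, the graph $H_{1}$ (the cycle $C_4$ with one chord added, i.e. $K_4$ minus an edge), the graph $H_{2}$ (vertices $v_1,\dots,v_5$ with edges $v_1v_2, v_2v_3, v_3v_4, v_2v_5$), and the graph $H_{3}$ (vertices $v_1,\dots,v_5$ with edges $v_1v_2, v_2v_3, v_3v_4, v_1v_5, v_2v_5$).
   Context: All graphs are simple, undirected and connected. $D(G)$ is the distance matrix of $G$ (entries are graph distances), with eigenvalues $\lambda_{1}(D(G))\geq\lambda_{2}(D(G))\geq\cdots\geq\lambda_{n}(D(G))$. *)

(* Defs.v *)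
From HB Require Import structures.
From mathcomp Require Import all_boot all_order all_algebra.
From mathcomp Require Import polyrcf.
Set Implicit Arguments. Unset Strict Implicit. Unset Printing Implicit Defensive.
Import Order.TTheory GRing.Theory Num.Theory.
Local Open Scope ring_scope.

Definition simple_graph (n : nat) (e : rel 'I_n) : Prop :=
  symmetric e /\ irreflexive e.

Definition connected_graph (n : nat) (e : rel 'I_n) : Prop :=
  forall x y, connect e x y.

Definition walk_of_len (n : nat) (e : rel 'I_n) (x y : 'I_n) (k : nat) : bool :=
  [exists p : k.-tuple 'I_n, path e x p && (last x p == y)].

(* graph distance: least k < n with a walk of length k (well defined for
   connected graphs, where shortest walks have length <= n-1) *)
Definition gdist (n : nat) (e : rel 'I_n) (x y : 'I_n) : nat :=
  find (walk_of_len e x y) (iota 0 n).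

Definition dist_mx (R : nzRingType) (n : nat) (e : rel 'I_n) : 'M[R]_n :=
  \matrix_(i, j) (gdist e i j)%:R.

Definition eigenvalues (R : rcfType) (n : nat) (A : 'M[R]_n) : seq R :=
  let p := char_poly A in
  sort (fun x y : R => y <= x) (flatten [seq nseq (mup x p) x | x <- rootsR p]).

(* lambda_k(A), 1-indexed *)
Definition lambda (R : rcfType) (n : nat) (A : 'M[R]_n) (k : nat) : R :=
  nth 0 (eigenvalues A) k.-1.

Definition edge_rel (k : nat) (s : seq (nat * nat)) : rel 'I_k :=
  fun i j => (((i : nat), (j : nat)) \in s) || (((j : nat), (i : nat)) \in s).

Definition induced_sub (n k : nat) (e : rel 'I_n) (h : rel 'I_k) : Prop :=
  exists f : 'I_k -> 'I_n, injective f /\ forall i j, e (f i) (f j) = h i j.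

(* vertices v1..v5 are 0..4 *)
Definition C4 : rel 'I_4 := @edge_rel 4 [:: (0,1); (1,2); (2,3); (3,0)]%N.
Definition C5 : rel 'I_5 := @edge_rel 5 [:: (0,1); (1,2); (2,3); (3,4); (4,0)]%N.
Definition P5 : rel 'I_5 := @edge_rel 5 [:: (0,1); (1,2); (2,3); (3,4)]%N.
Definition H1 : rel 'I_4 := @edge_rel 4 [:: (0,1); (1,2); (2,3); (3,0); (0,2)]%N.
Definition H2 : rel 'I_5 := @edge_rel 5 [:: (0,1); (1,2); (2,3); (1,4)]%N.
Definition H3 : rel 'I_5 := @edge_rel 5 [:: (0,1); (1,2); (2,3); (0,4); (1,4)]%N.

(* Main.v *)
Require Import Defs.
From HB Require Import structures.
From mathcomp Require Import all_boot all_order all_algebra.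
From mathcomp Require Import polyrcf complex ring lra zify.
Set Implicit Arguments. Unset Strict Implicit. Unset Printing Implicit Defensive.
Import Order.TTheory GRing.Theory Num.Theory.
Local Open Scope ring_scope.
Lemma count_flatten_nseq (T : eqType) (f : T -> nat) (s : seq T) (x : T) :
  uniq s ->
  count_mem x (flatten [seq nseq (f y) y | y <- s]) = if x \in s then f x else 0%N.
Proof.
elim: s => [|y s IH] //= /andP[ys us].
rewrite count_cat IH // count_nseq in_cons /=.
case: (eqVneq x y) => [->|nxy] /=.
  by rewrite (negbTE ys) mul1n addn0.
by rewrite mul0n.
Qed.

Lemma perm_roots (R : rcfType) (n : nat) (r : 'I_n -> R) :
  perm_eq (flatten [seq nseq (mup x (\prod_(i < n) ('X - (r i)%:P))) x
     | x <- rootsR (\prod_(i < n) ('X - (r i)%:P))]) [seq r i | i <- enum 'I_n].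
Proof.
set p := \prod_(i < n) _.
have pE : p = \prod_(y <- [seq r i | i <- enum 'I_n]) ('X - y%:P).
  by rewrite big_map big_enum.
have p0 : p != 0 by rewrite pE monic_neq0 // monic_prod_XsubC.
apply/allP => x _; apply/eqP.
rewrite count_flatten_nseq; last by rewrite /rootsR uniq_roots.
have := roots_on_rootsR p0 x; rewrite in_itv /= => <-.
rewrite {2}pE -mu_prod_XsubC -pE.
by case: ifP => // /negbT /mupNroot ->.
Qed.
Lemma count_gt_sorted (R : realDomainType) (s : seq R) (c : R) :
  sorted (fun x y => y <= x) s -> nth 0 s 1 <= c ->
  leq (count (fun x => c < x) s) 1.
Proof.
case: s => [|a [|b t]] //=; first by case: (c < a).
move=> /andP[_ pt] hb.
have := order_path_min (fun y x z (h1 : y <= x) (h2 : z <= y) => le_trans h2 h1) pt.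
move=> /allP allt.
have -> : count (fun x => c < x) t = 0%N.
  apply/eqP; rewrite -leqn0 leqNgt -has_count; apply/hasP => -[x xt].
  by apply/negP; rewrite -leNgt (le_trans (allt x xt)).
by rewrite addn0 (ltNge c b) hb /=; case: (c < a).
Qed.

Lemma count_le1_uniq (n : nat) (q : pred 'I_n) :
  leq (count q (enum 'I_n)) 1 -> forall i j, q i -> q j -> i = j.
Proof.
move=> hc i j qi qj; apply/eqP; apply/negPn/negP => nij.
have : (size [:: i; j] <= size (filter q (enum 'I_n)))%N.
  apply: uniq_leq_size; first by rewrite /= inE nij.
  by move=> x; rewrite !inE mem_filter mem_enum => /orP[] /eqP ->; rewrite ?qi ?qj.
by rewrite size_filter /= => h; move: (leq_trans h hc).
Qed.

Lemma char_poly_similar (R : comUnitRingType) (n : nat) (P B : 'M[R]_n) :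
  P \in unitmx -> char_poly (invmx P *m B *m P) = char_poly B.
Proof.
move=> Pu; rewrite /char_poly /char_poly_mx.
have Xe : ('X%:M : 'M[{poly R}]_n) =
    map_mx polyC (invmx P) *m 'X%:M *m map_mx polyC P.
  by rewrite mul_mx_scalar -scalemxAl -map_mxM mulVmx // map_mx1 scalemx1.
rewrite {1}Xe !map_mxM -mulmxBl -mulmxBr !det_mulmx !det_map_mx.
by rewrite mulrAC -rmorphM -det_mulmx mulVmx // det1 rmorph1 mul1r.
Qed.
Lemma form_spectral (C : numClosedFieldType) (n : nat) (A : 'M[C]_n) (c : C)
  (w : 'rV[C]_n) : A \is hermsymmx ->
  (w *m (A - c%:M) *m (w ^t*)%sesqui) 0 0 =
  \sum_i (spectral_diag A 0 i - c) *
     ((w *m (spectralmx A ^t*)%sesqui) 0 i * ((w *m (spectralmx A ^t*)%sesqui) 0 i)^*).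
Proof.
move=> hA.
have /orthomx_spectralP AE := hermitian_normalmx hA.
set P := spectralmx A in AE *; set d := spectral_diag A in AE *.
have Pu : P \is unitarymx by apply: spectral_unitarymx.
rewrite invmx_unitary // in AE.
have PtP : (P ^t*)%sesqui *m P = 1%:M.
  rewrite -trmxC_unitary in Pu.
  by have /unitarymxP := Pu; rewrite trmxCK.
have E : A - c%:M = (P ^t*)%sesqui *m diag_mx (\row_i (d 0 i - c)) *m P.
  have -> : diag_mx (\row_i (d 0 i - c)) = diag_mx d - c%:M.
    by apply/matrixP => i j; rewrite !mxE -mulrnBl.
  by rewrite mulmxBr mulmxBl -AE mul_mx_scalar -scalemxAl PtP scalemx1.
have yE : ((w *m (P ^t*)%sesqui) ^t*)%sesqui = P *m (w ^t*)%sesqui.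
  by rewrite trmx_mul map_mxM trmxCK.
rewrite E !mulmxA -[_ *m P *m _]mulmxA -yE mxE.
apply: eq_bigr => i _; rewrite mul_mx_diag !mxE.
by rewrite [_ * (d 0 i - c)]mulrC -mulrA.
Qed.
Lemma conj_rc (R : rcfType) (x : R) : ((x%:C)%C)^* = (x%:C)%C.
Proof. by apply: conj_Creal; rewrite -complexr0 complex_real. Qed.

Lemma tC_rc (R : rcfType) m n (U : 'M[R]_(m, n)) :
  ((map_mx (real_complex R) U) ^t*)%sesqui = (map_mx (real_complex R) U)^T.
Proof. by apply/matrixP => i j; rewrite !mxE conj_rc. Qed.

Lemma gram_expand (R : rcfType) n (M : 'M[R]_n) (u v : 'rV[R]_n) (a b : R[i]) :
  ((a *: map_mx (real_complex R) u + b *: map_mx (real_complex R) v)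
     *m map_mx (real_complex R) M
     *m ((a *: map_mx (real_complex R) u + b *: map_mx (real_complex R) v) ^t*)%sesqui) 0 0 =
   a * a^* * ((u *m M *m u^T) 0 0)%:C%C + a * b^* * ((u *m M *m v^T) 0 0)%:C%C
   + b * a^* * ((v *m M *m u^T) 0 0)%:C%C + b * b^* * ((v *m M *m v^T) 0 0)%:C%C.
Proof.
set U := map_mx _ u; set V := map_mx _ v.
have -> : (((a *: U + b *: V)) ^t*)%sesqui = a^* *: U^T + b^* *: V^T.
  by apply/matrixP => i j; rewrite !mxE rmorphD !rmorphM /= !conj_rc.
have key : forall x y : 'rV[R]_n, map_mx (real_complex R) x *m map_mx (real_complex R) M
    *m (map_mx (real_complex R) y)^T = map_mx (real_complex R) (x *m M *m y^T).
  by move=> x y; rewrite !map_mxM map_trmx.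
rewrite !mulmxDl !mulmxDr -!scalemxAl -!scalemxAr !key.
set g1 := u *m M *m u^T; set g2 := u *m M *m v^T; set g3 := v *m M *m u^T; set g4 := v *m M *m v^T.
by rewrite !mxE !mulrA !addrA.
Qed.
Lemma gram_pos (R : rcfType) (g11 g12 g22 : R) (a b : R[i]) :
  0 < g11 -> g12 ^+ 2 < g11 * g22 -> (a != 0) || (b != 0) ->
  0 < a * a^* * g11%:C%C + a * b^* * g12%:C%C + b * a^* * g12%:C%C + b * b^* * g22%:C%C.
Proof.
move=> h11 hdet hab.
set Q := _ + _.
have E : g11%:C%C * Q = (a * g11%:C%C + b * g12%:C%C) * (a * g11%:C%C + b * g12%:C%C)^*
   + b * b^* * (g11 * g22 - g12 ^+ 2)%:C%C.
  rewrite rmorphD !rmorphM /= !conj_rc /Q rmorphB /= rmorphM /= rmorphXn /=.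
  ring.
have h11C : 0 < g11%:C%C :> R[i] by rewrite ltcR.
have : 0 < g11%:C%C * Q.
  rewrite E; have [b0|bn0] := eqVneq b 0.
    move: hab; rewrite b0 eqxx orbF => ha.
    by rewrite !mul0r !addr0 mul_conjC_gt0 mulf_neq0 // gt_eqF.
  apply: ltr_wpDl; first by apply: mul_conjC_ge0.
  by rewrite mulr_gt0 ?mul_conjC_gt0 // ltcR subr_gt0.
by rewrite pmulr_rgt0.
Qed.

Lemma lambda2_gt (R : rcfType) n (A : 'M[R]_n) (c : R) (u v : 'rV[R]_n) :
  A^T = A ->
  0 < (u *m (A - c%:M) *m u^T) 0 0 ->
  ((u *m (A - c%:M) *m v^T) 0 0) ^+ 2 <
     (u *m (A - c%:M) *m u^T) 0 0 * (v *m (A - c%:M) *m v^T) 0 0 ->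
  c < lambda A 2.
Proof.
move=> AT h11 hdet.
rewrite ltNge; apply/negP => hl.
set A' := map_mx (real_complex R) A.
have hA : A' \is hermsymmx.
  apply/is_hermitianmxP; rewrite expr0 scale1r; apply/matrixP => i j.
  by rewrite !mxE conj_rc -{1}AT mxE.
set P := spectralmx A'; set d := spectral_diag A'.
have dreal : forall i, d 0 i \is Num.real.
  by move=> i; apply: (mxOverP (hermitian_spectral_diag_real hA)).
pose r i := complex.Re (d 0 i).
have dr : forall i, d 0 i = (r i)%:C%C by move=> i; rewrite RRe_real.
have cp : char_poly A = \prod_(i < n) ('X - (r i)%:P).
  apply: (@map_poly_inj _ _ (real_complex R)).
  rewrite map_char_poly.
  have /orthomx_spectralP AE := hermitian_normalmx hA.
  rewrite -/A' AE char_poly_similar ?spectral_unit // char_poly_trig ?diag_mx_is_trig //.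
  rewrite rmorph_prod; apply: eq_bigr => i _.
  by rewrite mxE eqxx mulr1n dr rmorphB /= map_polyX map_polyC.
have hcount : leq (count (fun x => c < x) [seq r i | i <- enum 'I_n]) 1.
  have tot : total (fun x y : R => y <= x) by move=> x y; apply: le_total.
  move: hl; rewrite /lambda /eigenvalues /= cp => hl.
  have := count_gt_sorted (sort_sorted tot _) hl.
  rewrite (permP (permEl (perm_sort _ _))).
  by rewrite (permP (perm_roots r)).
rewrite count_map in hcount.
have uniqc := count_le1_uniq hcount.
set U := map_mx (real_complex R) u; set V := map_mx (real_complex R) v.
have lin : forall (a b : R[i]) j, ((a *: U + b *: V) *m (P ^t*)%sesqui) 0 j
    = a * (U *m (P ^t*)%sesqui) 0 j + b * (V *m (P ^t*)%sesqui) 0 j.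
  by move=> a b j; rewrite mulmxDl -!scalemxAl !mxE.
have [a [b [hab hy]]] : exists a b : R[i], ((a != 0) || (b != 0)) /\
    forall i, c < r i -> ((a *: U + b *: V) *m (P ^t*)%sesqui) 0 i = 0.
  case: (pickP (fun i => c < r i)) => [j hj | hnone]; last first.
    by exists 1, 0; split; [rewrite oner_neq0 | move=> i; rewrite hnone].
  set al := (U *m (P ^t*)%sesqui) 0 j; set be := (V *m (P ^t*)%sesqui) 0 j.
  have [/andP[/eqP al0 /eqP be0]|nz] := boolP ((al == 0) && (be == 0)).
    exists 1, 0; split; first by rewrite oner_neq0.
    by move=> i hi; rewrite (uniqc _ _ hi hj) lin -/al -/be al0 be0 !mulr0 addr0.
  exists be, (- al); split.
    by move: nz; rewrite negb_and oppr_eq0 orbC.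
  by move=> i hi; rewrite (uniqc _ _ hi hj) lin -/al -/be mulrC mulNr addrN.
set w := a *: U + b *: V.
have ME : A' - ((c%:C)%C)%:M = map_mx (real_complex R) (A - c%:M).
  by rewrite map_mxB map_scalar_mx.
have Qpos : 0 < (w *m (A' - ((c%:C)%C)%:M) *m (w ^t*)%sesqui) 0 0.
  rewrite ME /w /U /V gram_expand.
  have -> : (v *m (A - c%:M) *m u^T) 0 0 = (u *m (A - c%:M) *m v^T) 0 0.
    have tE : forall X : 'M[R]_1, X 0 0 = X^T 0 0 by move=> X; rewrite mxE.
    rewrite tE !trmx_mul trmxK mulmxA.
    by rewrite linearB /= tr_scalar_mx AT.
  exact: gram_pos.
have Qle : (w *m (A' - ((c%:C)%C)%:M) *m (w ^t*)%sesqui) 0 0 <= 0.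
  rewrite form_spectral // -/P -/d; apply: sumr_le0 => i _.
  rewrite dr -rmorphB.
  have [hi|hi] := boolP (c < r i).
    by rewrite /w hy // mul0r mulr0.
  apply: mulr_le0_ge0; last exact: mul_conjC_ge0.
  by rewrite -(rmorph0 (real_complex R)) lecR subr_le0 leNgt.
by rewrite (le_gtF Qle) in Qpos.
Qed.
Section Walks.
Variables (n : nat) (e : rel 'I_n).
Hypothesis esym : symmetric e.

Lemma walk0 x y : walk_of_len e x y 0 = (x == y).
Proof.
apply/existsP/eqP => [[p]|->]; first by rewrite tuple0 /= => /eqP.
by exists [tuple]; rewrite /= eqxx.
Qed.

Lemma walk1 x y : walk_of_len e x y 1 = e x y.
Proof.
apply/existsP/idP => [[p]|h].
  by case/tupleP: p => z p; rewrite tuple0 /= andbT => /andP[h /eqP <-].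
by exists [tuple y]; rewrite /= h eqxx.
Qed.

Lemma walk_cons x z y k : e x z -> walk_of_len e z y k -> walk_of_len e x y k.+1.
Proof.
move=> hxz /existsP[p /andP[hp hl]]; apply/existsP; exists [tuple of z :: p].
by rewrite /= hxz hp.
Qed.

Lemma walk_rev x y k : walk_of_len e x y k -> walk_of_len e y x k.
Proof.
move=> /existsP[p /andP[hp /eqP hl]]; apply/existsP.
have sz : size (rev (belast x p)) == k by rewrite size_rev size_belast size_tuple.
exists (Tuple sz) => /=.
have esym' : (fun a b => e b a) =2 e by move=> a b; rewrite esym.
rewrite -hl rev_path (eq_path esym') hp /=.
case: (tval p) => [|z s] /=; first by rewrite eqxx.
by rewrite rev_cons last_rcons eqxx.
Qed.

Lemma gdist_sym x y : gdist e x y = gdist e y x.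
Proof.
rewrite /gdist; apply: eq_find => k.
by apply/idP/idP; apply: walk_rev.
Qed.

Lemma gdist_le x y k : (k < n)%N -> walk_of_len e x y k -> (gdist e x y <= k)%N.
Proof.
move=> kn w; rewrite leqNgt; apply/negP => hlt.
have := before_find 0%N hlt; rewrite nth_iota // add0n w //.
Qed.

Lemma gdist_ge x y m k : (k < n)%N -> walk_of_len e x y k ->
  (forall j, (j < m)%N -> ~~ walk_of_len e x y j) -> (m <= gdist e x y)%N.
Proof.
move=> kn w hj; rewrite leqNgt; apply/negP => hlt.
have hh : has (walk_of_len e x y) (iota 0 n).
  by apply/hasP; exists k; rewrite ?mem_iota.
have := nth_find 0%N hh; rewrite nth_iota ?add0n; last by rewrite -[X in (_ < X)%N](size_iota 0 n) -has_find.
by rewrite (negbTE (hj _ hlt)).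
Qed.

Lemma gdist_eq x y k : (k < n)%N -> walk_of_len e x y k ->
  (forall j, (j < k)%N -> ~~ walk_of_len e x y j) -> gdist e x y = k.
Proof.
move=> kn w hj; apply/eqP; rewrite eqn_leq gdist_le //=.
exact: gdist_ge w hj.
Qed.

End Walks.
Section Induced.
Variables (n k : nat) (e : rel 'I_n) (H : rel 'I_k) (f : 'I_k -> 'I_n).
Hypotheses (esym : symmetric e) (eirr : irreflexive e) (finj : injective f)
  (fe : forall i j, e (f i) (f j) = H i j) (hkn : (k <= n)%N).

Lemma d_refl i : gdist e (f i) (f i) = 0%N.
Proof.
apply: (@gdist_eq n e _ _ 0%N); first exact: leq_trans (leq_ltn_trans (leq0n _) (ltn_ord i)) hkn.
  by rewrite walk0.
by [].
Qed.

Lemma d_adj i j : (1 < n)%N -> H i j -> gdist e (f i) (f j) = 1%N.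
Proof.
move=> hn hij; apply: (@gdist_eq n e _ _ 1%N) => //; first by rewrite walk1 fe.
move=> [|//] _; rewrite walk0; apply/eqP => eqf.
by move: hij; rewrite -fe eqf eirr.
Qed.

Lemma d_two i j m : (2 < n)%N -> i != j -> ~~ H i j -> H i m -> H m j ->
  gdist e (f i) (f j) = 2%N.
Proof.
move=> hn nij nH him hmj; apply: (@gdist_eq n e _ _ 2%N) => //.
  by apply: (walk_cons (z := f m)); rewrite ?fe // walk1 fe.
move=> [|[|//]] _; first by rewrite walk0 (inj_eq finj).
by rewrite walk1 fe.
Qed.

Lemma d_range i j d : (d < n)%N -> i != j -> ~~ H i j -> walk_of_len e (f i) (f j) d ->
  (2 <= gdist e (f i) (f j) <= d)%N.
Proof.
move=> hn nij nH w; rewrite (gdist_le hn w) andbT.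
apply: (gdist_ge hn w) => -[|[|//]] _; first by rewrite walk0 (inj_eq finj).
by rewrite walk1 fe.
Qed.

Lemma wlk i j : H i j -> walk_of_len e (f i) (f j) 1.
Proof. by rewrite walk1 fe. Qed.

Lemma wlkS i m j d : H i m -> walk_of_len e (f m) (f j) d -> walk_of_len e (f i) (f j) d.+1.
Proof. by move=> him; apply: walk_cons; rewrite fe. Qed.

Lemma gram_sub (R : comNzRingType) (c : R) (al be : nat -> R) (T : nat -> nat -> nat) :
  (forall i j : 'I_k, gdist e (f i) (f j) = T i j) ->
  (((\sum_(i < k) al i *: delta_mx 0 (f i)) *m (dist_mx R e - c%:M)
     *m (\sum_(i < k) be i *: delta_mx 0 (f i))^T) : 'M[R]_1) 0 0 =
  \sum_(0 <= i < k) \sum_(0 <= j < k) al i * be j * ((T i j)%:R - c * (i == j)%:R).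
Proof.
move=> hT.
rewrite big_mkord !mulmx_suml summxE; apply: eq_bigr => i _.
rewrite linear_sum mulmx_sumr summxE big_mkord; apply: eq_bigr => j _.
rewrite linearZ /= -scalemxAr -!scalemxAl trmx_delta -rowE -colE !mxE hT (inj_eq finj).
by rewrite [c * _]mulr_natr mulrA [be j * _]mulrC.
Qed.

End Induced.

Definition c0 (R : rcfType) : R := - (569%:R / 1000%:R).

Definition G (R : nzRingType) (c : R) (k : nat) (s1 s2 : seq R) (T : nat -> nat -> nat) : R :=
  \sum_(0 <= i < k) \sum_(0 <= j < k) s1`_i * s2`_j * ((T i j)%:R - c * (i == j)%:R).

Lemma gram_check (R : rcfType) n k (e : rel 'I_n) (f : 'I_k -> 'I_n)
  (T : nat -> nat -> nat) (s1 s2 : seq R) (c : R) :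
  symmetric e -> injective f -> (forall i j : 'I_k, gdist e (f i) (f j) = T i j) ->
  0 < G c k s1 s1 T -> G c k s1 s2 T ^+ 2 < G c k s1 s1 T * G c k s2 s2 T ->
  c < lambda (dist_mx R e) 2.
Proof.
move=> esym finj hT h1 h2.
apply: (@lambda2_gt R n (dist_mx R e) c (\sum_(i < k) s1`_i *: delta_mx 0 (f i))
   (\sum_(i < k) s2`_i *: delta_mx 0 (f i))).
- by apply/matrixP => i j; rewrite !mxE (gdist_sym esym).
- by rewrite (gram_sub finj c (fun i => s1`_i) (fun i => s1`_i) hT).
- by rewrite !(gram_sub finj c _ _ hT).
Qed.

Lemma no_C4 (R : rcfType) n (e : rel 'I_n) :
  symmetric e -> irreflexive e -> induced_sub e C4 -> c0 R < lambda (dist_mx R e) 2.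
Proof.
move=> esym eirr [f [finj fe]].
have hkn : (4 <= n)%N by have := leq_card f finj; rewrite !card_ord.
have hn1 : (1 < n)%N := leq_trans (isT : (2 <= 4)%N) hkn.
have hn2 : (2 < n)%N := leq_trans (isT : (3 <= 4)%N) hkn.
have hn3 : (3 < n)%N := leq_trans (isT : (4 <= 4)%N) hkn.
have hT : forall i j : 'I_4, gdist e (f i) (f j) = nth 0%N (nth [::] [:: [:: 0; 1; 2; 1]; [:: 1; 0; 1; 2]; [:: 2; 1; 0; 1]; [:: 1; 2; 1; 0]] i) j.
  move=> [[|[|[|[|i]]]] hi] //; move=> [[|[|[|[|i]]]] hj] //;
  rewrite ?(bool_irrelevance hi isT) ?(bool_irrelevance hj isT) /=;
  first [(by apply: d_refl) | (by apply: (d_adj eirr fe)) | (by apply: (d_two finj fe (m := (@Ordinal 4 0 isT)))) | (by apply: (d_two finj fe (m := (@Ordinal 4 1 isT)))) | (by apply: (d_two finj fe (m := (@Ordinal 4 2 isT)))) | (by apply: (d_two finj fe (m := (@Ordinal 4 3 isT)))) | reflexivity | (rewrite (gdist_sym esym); reflexivity)].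
apply: (@gram_check R n 4 e f (fun i j => nth 0%N (nth [::] [:: [:: 0; 1; 2; 1]; [:: 1; 0; 1; 2]; [:: 2; 1; 0; 1]; [:: 1; 2; 1; 0]] i) j) [:: 1%:R; 1%:R; 1%:R; 1%:R] [:: -1%:R; 1%:R; -1%:R; 1%:R] (c0 R) esym finj hT);
  by rewrite /G /c0 unlock /=; lra.
Qed.

Lemma no_C5 (R : rcfType) n (e : rel 'I_n) :
  symmetric e -> irreflexive e -> induced_sub e C5 -> c0 R < lambda (dist_mx R e) 2.
Proof.
move=> esym eirr [f [finj fe]].
have hkn : (5 <= n)%N by have := leq_card f finj; rewrite !card_ord.
have hn1 : (1 < n)%N := leq_trans (isT : (2 <= 5)%N) hkn.
have hn2 : (2 < n)%N := leq_trans (isT : (3 <= 5)%N) hkn.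
have hn3 : (3 < n)%N := leq_trans (isT : (4 <= 5)%N) hkn.
have hn4 : (4 < n)%N := leq_trans (isT : (5 <= 5)%N) hkn.
have hT : forall i j : 'I_5, gdist e (f i) (f j) = nth 0%N (nth [::] [:: [:: 0; 1; 2; 2; 1]; [:: 1; 0; 1; 2; 2]; [:: 2; 1; 0; 1; 2]; [:: 2; 2; 1; 0; 1]; [:: 1; 2; 2; 1; 0]] i) j.
  move=> [[|[|[|[|[|i]]]]] hi] //; move=> [[|[|[|[|[|i]]]]] hj] //;
  rewrite ?(bool_irrelevance hi isT) ?(bool_irrelevance hj isT) /=;
  first [(by apply: d_refl) | (by apply: (d_adj eirr fe)) | (by apply: (d_two finj fe (m := (@Ordinal 5 0 isT)))) | (by apply: (d_two finj fe (m := (@Ordinal 5 1 isT)))) | (by apply: (d_two finj fe (m := (@Ordinal 5 2 isT)))) | (by apply: (d_two finj fe (m := (@Ordinal 5 3 isT)))) | (by apply: (d_two finj fe (m := (@Ordinal 5 4 isT)))) | reflexivity | (rewrite (gdist_sym esym); reflexivity)].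
apply: (@gram_check R n 5 e f (fun i j => nth 0%N (nth [::] [:: [:: 0; 1; 2; 2; 1]; [:: 1; 0; 1; 2; 2]; [:: 2; 1; 0; 1; 2]; [:: 2; 2; 1; 0; 1]; [:: 1; 2; 2; 1; 0]] i) j) [:: 1%:R; 1%:R; 1%:R; 1%:R; 1%:R] [:: 0%:R; -1%:R; 1%:R; -1%:R; 0%:R] (c0 R) esym finj hT);
  by rewrite /G /c0 unlock /=; lra.
Qed.

Lemma no_P5 (R : rcfType) n (e : rel 'I_n) :
  symmetric e -> irreflexive e -> induced_sub e P5 -> c0 R < lambda (dist_mx R e) 2.
Proof.
move=> esym eirr [f [finj fe]].
have hkn : (5 <= n)%N by have := leq_card f finj; rewrite !card_ord.
have hn1 : (1 < n)%N := leq_trans (isT : (2 <= 5)%N) hkn.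
have hn2 : (2 < n)%N := leq_trans (isT : (3 <= 5)%N) hkn.
have hn3 : (3 < n)%N := leq_trans (isT : (4 <= 5)%N) hkn.
have hn4 : (4 < n)%N := leq_trans (isT : (5 <= 5)%N) hkn.
set d03 := gdist e (f (@Ordinal 5 0 isT)) (f (@Ordinal 5 3 isT)).
have r03 : (2 <= d03 <= 3)%N.
  apply: (d_range finj fe) => //.
  apply: (wlkS fe (m := (@Ordinal 5 1 isT))) => //.
  apply: (wlkS fe (m := (@Ordinal 5 2 isT))) => //.
  by apply: (wlk fe).
set d04 := gdist e (f (@Ordinal 5 0 isT)) (f (@Ordinal 5 4 isT)).
have r04 : (2 <= d04 <= 4)%N.
  apply: (d_range finj fe) => //.
  apply: (wlkS fe (m := (@Ordinal 5 1 isT))) => //.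
  apply: (wlkS fe (m := (@Ordinal 5 2 isT))) => //.
  apply: (wlkS fe (m := (@Ordinal 5 3 isT))) => //.
  by apply: (wlk fe).
set d14 := gdist e (f (@Ordinal 5 1 isT)) (f (@Ordinal 5 4 isT)).
have r14 : (2 <= d14 <= 3)%N.
  apply: (d_range finj fe) => //.
  apply: (wlkS fe (m := (@Ordinal 5 2 isT))) => //.
  apply: (wlkS fe (m := (@Ordinal 5 3 isT))) => //.
  by apply: (wlk fe).
have hT : forall i j : 'I_5, gdist e (f i) (f j) = nth 0%N (nth [::] [:: [:: 0; 1; 2; d03; d04]; [:: 1; 0; 1; 2; d14]; [:: 2; 1; 0; 1; 2]; [:: d03; 2; 1; 0; 1]; [:: d04; d14; 2; 1; 0]] i) j.
  move=> [[|[|[|[|[|i]]]]] hi] //; move=> [[|[|[|[|[|i]]]]] hj] //;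
  rewrite ?(bool_irrelevance hi isT) ?(bool_irrelevance hj isT) /=;
  first [(by apply: d_refl) | (by apply: (d_adj eirr fe)) | (by apply: (d_two finj fe (m := (@Ordinal 5 0 isT)))) | (by apply: (d_two finj fe (m := (@Ordinal 5 1 isT)))) | (by apply: (d_two finj fe (m := (@Ordinal 5 2 isT)))) | (by apply: (d_two finj fe (m := (@Ordinal 5 3 isT)))) | (by apply: (d_two finj fe (m := (@Ordinal 5 4 isT)))) | reflexivity | (rewrite (gdist_sym esym); reflexivity)].
clearbody d03 d04 d14.
have [Ed03|Ed03] : d03 = 2%N \/ d03 = 3%N by lia.
all: rewrite Ed03 in hT.
all: have [Ed04|[Ed04|Ed04]] : d04 = 2%N \/ d04 = 3%N \/ d04 = 4%N by lia.
all: rewrite Ed04 in hT.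
all: have [Ed14|Ed14] : d14 = 2%N \/ d14 = 3%N by lia.
all: rewrite Ed14 in hT.
- apply: (@gram_check R n 5 e f (fun i j => nth 0%N (nth [::] [:: [:: 0; 1; 2; 2; 2]; [:: 1; 0; 1; 2; 2]; [:: 2; 1; 0; 1; 2]; [:: 2; 2; 1; 0; 1]; [:: 2; 2; 2; 1; 0]] i) j) [:: 1%:R; 1%:R; 1%:R; 1%:R; 1%:R] [:: 0%:R; -1%:R; 1%:R; -1%:R; 0%:R] (c0 R) esym finj hT);
    by rewrite /G /c0 unlock /=; lra.
- apply: (@gram_check R n 5 e f (fun i j => nth 0%N (nth [::] [:: [:: 0; 1; 2; 2; 2]; [:: 1; 0; 1; 2; 3]; [:: 2; 1; 0; 1; 2]; [:: 2; 2; 1; 0; 1]; [:: 2; 3; 2; 1; 0]] i) j) [:: 1%:R; 1%:R; 1%:R; 1%:R; 1%:R] [:: 1%:R; -1%:R; 1%:R; 0%:R; 0%:R] (c0 R) esym finj hT);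
    by rewrite /G /c0 unlock /=; lra.
- apply: (@gram_check R n 5 e f (fun i j => nth 0%N (nth [::] [:: [:: 0; 1; 2; 2; 3]; [:: 1; 0; 1; 2; 2]; [:: 2; 1; 0; 1; 2]; [:: 2; 2; 1; 0; 1]; [:: 3; 2; 2; 1; 0]] i) j) [:: 1%:R; 0%:R; 0%:R; 0%:R; 1%:R] [:: 0%:R; -1%:R; 0%:R; -1%:R; 0%:R] (c0 R) esym finj hT);
    by rewrite /G /c0 unlock /=; lra.
- apply: (@gram_check R n 5 e f (fun i j => nth 0%N (nth [::] [:: [:: 0; 1; 2; 2; 3]; [:: 1; 0; 1; 2; 3]; [:: 2; 1; 0; 1; 2]; [:: 2; 2; 1; 0; 1]; [:: 3; 3; 2; 1; 0]] i) j) [:: 1%:R; 1%:R; 1%:R; 1%:R; 1%:R] [:: 1%:R; -1%:R; 1%:R; -1%:R; 0%:R] (c0 R) esym finj hT);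
    by rewrite /G /c0 unlock /=; lra.
- apply: (@gram_check R n 5 e f (fun i j => nth 0%N (nth [::] [:: [:: 0; 1; 2; 2; 4]; [:: 1; 0; 1; 2; 2]; [:: 2; 1; 0; 1; 2]; [:: 2; 2; 1; 0; 1]; [:: 4; 2; 2; 1; 0]] i) j) [:: 1%:R; 0%:R; 0%:R; 0%:R; 1%:R] [:: 0%:R; -1%:R; 0%:R; -1%:R; 0%:R] (c0 R) esym finj hT);
    by rewrite /G /c0 unlock /=; lra.
- apply: (@gram_check R n 5 e f (fun i j => nth 0%N (nth [::] [:: [:: 0; 1; 2; 2; 4]; [:: 1; 0; 1; 2; 3]; [:: 2; 1; 0; 1; 2]; [:: 2; 2; 1; 0; 1]; [:: 4; 3; 2; 1; 0]] i) j) [:: 1%:R; 1%:R; 1%:R; 1%:R; 1%:R] [:: 1%:R; -1%:R; 1%:R; -1%:R; 0%:R] (c0 R) esym finj hT);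
    by rewrite /G /c0 unlock /=; lra.
- apply: (@gram_check R n 5 e f (fun i j => nth 0%N (nth [::] [:: [:: 0; 1; 2; 3; 2]; [:: 1; 0; 1; 2; 2]; [:: 2; 1; 0; 1; 2]; [:: 3; 2; 1; 0; 1]; [:: 2; 2; 2; 1; 0]] i) j) [:: 1%:R; 1%:R; 1%:R; 1%:R; 1%:R] [:: 0%:R; 0%:R; 1%:R; -1%:R; 1%:R] (c0 R) esym finj hT);
    by rewrite /G /c0 unlock /=; lra.
- apply: (@gram_check R n 5 e f (fun i j => nth 0%N (nth [::] [:: [:: 0; 1; 2; 3; 2]; [:: 1; 0; 1; 2; 3]; [:: 2; 1; 0; 1; 2]; [:: 3; 2; 1; 0; 1]; [:: 2; 3; 2; 1; 0]] i) j) [:: 1%:R; 1%:R; 1%:R; 1%:R; 1%:R] [:: -1%:R; 1%:R; 0%:R; -1%:R; 1%:R] (c0 R) esym finj hT);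
    by rewrite /G /c0 unlock /=; lra.
- apply: (@gram_check R n 5 e f (fun i j => nth 0%N (nth [::] [:: [:: 0; 1; 2; 3; 3]; [:: 1; 0; 1; 2; 2]; [:: 2; 1; 0; 1; 2]; [:: 3; 2; 1; 0; 1]; [:: 3; 2; 2; 1; 0]] i) j) [:: 1%:R; 1%:R; 1%:R; 1%:R; 1%:R] [:: 0%:R; -1%:R; 1%:R; -1%:R; 1%:R] (c0 R) esym finj hT);
    by rewrite /G /c0 unlock /=; lra.
- apply: (@gram_check R n 5 e f (fun i j => nth 0%N (nth [::] [:: [:: 0; 1; 2; 3; 3]; [:: 1; 0; 1; 2; 3]; [:: 2; 1; 0; 1; 2]; [:: 3; 2; 1; 0; 1]; [:: 3; 3; 2; 1; 0]] i) j) [:: 1%:R; 1%:R; 1%:R; 1%:R; 1%:R] [:: -1%:R; 1%:R; 0%:R; -1%:R; 1%:R] (c0 R) esym finj hT);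
    by rewrite /G /c0 unlock /=; lra.
- apply: (@gram_check R n 5 e f (fun i j => nth 0%N (nth [::] [:: [:: 0; 1; 2; 3; 4]; [:: 1; 0; 1; 2; 2]; [:: 2; 1; 0; 1; 2]; [:: 3; 2; 1; 0; 1]; [:: 4; 2; 2; 1; 0]] i) j) [:: 1%:R; 1%:R; 1%:R; 1%:R; 1%:R] [:: 0%:R; -1%:R; 1%:R; -1%:R; 1%:R] (c0 R) esym finj hT);
    by rewrite /G /c0 unlock /=; lra.
- apply: (@gram_check R n 5 e f (fun i j => nth 0%N (nth [::] [:: [:: 0; 1; 2; 3; 4]; [:: 1; 0; 1; 2; 3]; [:: 2; 1; 0; 1; 2]; [:: 3; 2; 1; 0; 1]; [:: 4; 3; 2; 1; 0]] i) j) [:: 2%:R; 1%:R; 1%:R; 1%:R; 2%:R] [:: 0%:R; -2%:R; 2%:R; -2%:R; 0%:R] (c0 R) esym finj hT);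
    by rewrite /G /c0 unlock /=; lra.
Qed.

Lemma no_H1 (R : rcfType) n (e : rel 'I_n) :
  symmetric e -> irreflexive e -> induced_sub e H1 -> c0 R < lambda (dist_mx R e) 2.
Proof.
move=> esym eirr [f [finj fe]].
have hkn : (4 <= n)%N by have := leq_card f finj; rewrite !card_ord.
have hn1 : (1 < n)%N := leq_trans (isT : (2 <= 4)%N) hkn.
have hn2 : (2 < n)%N := leq_trans (isT : (3 <= 4)%N) hkn.
have hn3 : (3 < n)%N := leq_trans (isT : (4 <= 4)%N) hkn.
have hT : forall i j : 'I_4, gdist e (f i) (f j) = nth 0%N (nth [::] [:: [:: 0; 1; 1; 1]; [:: 1; 0; 1; 2]; [:: 1; 1; 0; 1]; [:: 1; 2; 1; 0]] i) j.
  move=> [[|[|[|[|i]]]] hi] //; move=> [[|[|[|[|i]]]] hj] //;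
  rewrite ?(bool_irrelevance hi isT) ?(bool_irrelevance hj isT) /=;
  first [(by apply: d_refl) | (by apply: (d_adj eirr fe)) | (by apply: (d_two finj fe (m := (@Ordinal 4 0 isT)))) | (by apply: (d_two finj fe (m := (@Ordinal 4 1 isT)))) | (by apply: (d_two finj fe (m := (@Ordinal 4 2 isT)))) | (by apply: (d_two finj fe (m := (@Ordinal 4 3 isT)))) | reflexivity | (rewrite (gdist_sym esym); reflexivity)].
apply: (@gram_check R n 4 e f (fun i j => nth 0%N (nth [::] [:: [:: 0; 1; 1; 1]; [:: 1; 0; 1; 2]; [:: 1; 1; 0; 1]; [:: 1; 2; 1; 0]] i) j) [:: 0%:R; 1%:R; 0%:R; 1%:R] [:: 1%:R; 0%:R; 1%:R; 0%:R] (c0 R) esym finj hT);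
  by rewrite /G /c0 unlock /=; lra.
Qed.

Lemma no_H2 (R : rcfType) n (e : rel 'I_n) :
  symmetric e -> irreflexive e -> induced_sub e H2 -> c0 R < lambda (dist_mx R e) 2.
Proof.
move=> esym eirr [f [finj fe]].
have hkn : (5 <= n)%N by have := leq_card f finj; rewrite !card_ord.
have hn1 : (1 < n)%N := leq_trans (isT : (2 <= 5)%N) hkn.
have hn2 : (2 < n)%N := leq_trans (isT : (3 <= 5)%N) hkn.
have hn3 : (3 < n)%N := leq_trans (isT : (4 <= 5)%N) hkn.
have hn4 : (4 < n)%N := leq_trans (isT : (5 <= 5)%N) hkn.
set d03 := gdist e (f (@Ordinal 5 0 isT)) (f (@Ordinal 5 3 isT)).
have r03 : (2 <= d03 <= 3)%N.
  apply: (d_range finj fe) => //.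
  apply: (wlkS fe (m := (@Ordinal 5 1 isT))) => //.
  apply: (wlkS fe (m := (@Ordinal 5 2 isT))) => //.
  by apply: (wlk fe).
set d34 := gdist e (f (@Ordinal 5 3 isT)) (f (@Ordinal 5 4 isT)).
have r34 : (2 <= d34 <= 3)%N.
  apply: (d_range finj fe) => //.
  apply: (wlkS fe (m := (@Ordinal 5 2 isT))) => //.
  apply: (wlkS fe (m := (@Ordinal 5 1 isT))) => //.
  by apply: (wlk fe).
have hT : forall i j : 'I_5, gdist e (f i) (f j) = nth 0%N (nth [::] [:: [:: 0; 1; 2; d03; 2]; [:: 1; 0; 1; 2; 1]; [:: 2; 1; 0; 1; 2]; [:: d03; 2; 1; 0; d34]; [:: 2; 1; 2; d34; 0]] i) j.
  move=> [[|[|[|[|[|i]]]]] hi] //; move=> [[|[|[|[|[|i]]]]] hj] //;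
  rewrite ?(bool_irrelevance hi isT) ?(bool_irrelevance hj isT) /=;
  first [(by apply: d_refl) | (by apply: (d_adj eirr fe)) | (by apply: (d_two finj fe (m := (@Ordinal 5 0 isT)))) | (by apply: (d_two finj fe (m := (@Ordinal 5 1 isT)))) | (by apply: (d_two finj fe (m := (@Ordinal 5 2 isT)))) | (by apply: (d_two finj fe (m := (@Ordinal 5 3 isT)))) | (by apply: (d_two finj fe (m := (@Ordinal 5 4 isT)))) | reflexivity | (rewrite (gdist_sym esym); reflexivity)].
clearbody d03 d34.
have [Ed03|Ed03] : d03 = 2%N \/ d03 = 3%N by lia.
all: rewrite Ed03 in hT.
all: have [Ed34|Ed34] : d34 = 2%N \/ d34 = 3%N by lia.
all: rewrite Ed34 in hT.
- apply: (@gram_check R n 5 e f (fun i j => nth 0%N (nth [::] [:: [:: 0; 1; 2; 2; 2]; [:: 1; 0; 1; 2; 1]; [:: 2; 1; 0; 1; 2]; [:: 2; 2; 1; 0; 2]; [:: 2; 1; 2; 2; 0]] i) j) [:: 1%:R; 1%:R; 1%:R; 1%:R; 1%:R] [:: 0%:R; -1%:R; 1%:R; -1%:R; 0%:R] (c0 R) esym finj hT);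
    by rewrite /G /c0 unlock /=; lra.
- apply: (@gram_check R n 5 e f (fun i j => nth 0%N (nth [::] [:: [:: 0; 1; 2; 2; 2]; [:: 1; 0; 1; 2; 1]; [:: 2; 1; 0; 1; 2]; [:: 2; 2; 1; 0; 3]; [:: 2; 1; 2; 3; 0]] i) j) [:: 1%:R; 1%:R; 1%:R; 1%:R; 1%:R] [:: 1%:R; -1%:R; 1%:R; -1%:R; 0%:R] (c0 R) esym finj hT);
    by rewrite /G /c0 unlock /=; lra.
- apply: (@gram_check R n 5 e f (fun i j => nth 0%N (nth [::] [:: [:: 0; 1; 2; 3; 2]; [:: 1; 0; 1; 2; 1]; [:: 2; 1; 0; 1; 2]; [:: 3; 2; 1; 0; 2]; [:: 2; 1; 2; 2; 0]] i) j) [:: 1%:R; 1%:R; 1%:R; 1%:R; 1%:R] [:: 0%:R; -1%:R; 1%:R; -1%:R; 1%:R] (c0 R) esym finj hT);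
    by rewrite /G /c0 unlock /=; lra.
- apply: (@gram_check R n 5 e f (fun i j => nth 0%N (nth [::] [:: [:: 0; 1; 2; 3; 2]; [:: 1; 0; 1; 2; 1]; [:: 2; 1; 0; 1; 2]; [:: 3; 2; 1; 0; 3]; [:: 2; 1; 2; 3; 0]] i) j) [:: 1%:R; 1%:R; 1%:R; 1%:R; 1%:R] [:: 0%:R; -2%:R; 1%:R; -1%:R; 0%:R] (c0 R) esym finj hT);
    by rewrite /G /c0 unlock /=; lra.
Qed.

Lemma no_H3 (R : rcfType) n (e : rel 'I_n) :
  symmetric e -> irreflexive e -> induced_sub e H3 -> c0 R < lambda (dist_mx R e) 2.
Proof.
move=> esym eirr [f [finj fe]].
have hkn : (5 <= n)%N by have := leq_card f finj; rewrite !card_ord.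
have hn1 : (1 < n)%N := leq_trans (isT : (2 <= 5)%N) hkn.
have hn2 : (2 < n)%N := leq_trans (isT : (3 <= 5)%N) hkn.
have hn3 : (3 < n)%N := leq_trans (isT : (4 <= 5)%N) hkn.
have hn4 : (4 < n)%N := leq_trans (isT : (5 <= 5)%N) hkn.
set d03 := gdist e (f (@Ordinal 5 0 isT)) (f (@Ordinal 5 3 isT)).
have r03 : (2 <= d03 <= 3)%N.
  apply: (d_range finj fe) => //.
  apply: (wlkS fe (m := (@Ordinal 5 1 isT))) => //.
  apply: (wlkS fe (m := (@Ordinal 5 2 isT))) => //.
  by apply: (wlk fe).
set d34 := gdist e (f (@Ordinal 5 3 isT)) (f (@Ordinal 5 4 isT)).
have r34 : (2 <= d34 <= 3)%N.
  apply: (d_range finj fe) => //.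
  apply: (wlkS fe (m := (@Ordinal 5 2 isT))) => //.
  apply: (wlkS fe (m := (@Ordinal 5 1 isT))) => //.
  by apply: (wlk fe).
have hT : forall i j : 'I_5, gdist e (f i) (f j) = nth 0%N (nth [::] [:: [:: 0; 1; 2; d03; 1]; [:: 1; 0; 1; 2; 1]; [:: 2; 1; 0; 1; 2]; [:: d03; 2; 1; 0; d34]; [:: 1; 1; 2; d34; 0]] i) j.
  move=> [[|[|[|[|[|i]]]]] hi] //; move=> [[|[|[|[|[|i]]]]] hj] //;
  rewrite ?(bool_irrelevance hi isT) ?(bool_irrelevance hj isT) /=;
  first [(by apply: d_refl) | (by apply: (d_adj eirr fe)) | (by apply: (d_two finj fe (m := (@Ordinal 5 0 isT)))) | (by apply: (d_two finj fe (m := (@Ordinal 5 1 isT)))) | (by apply: (d_two finj fe (m := (@Ordinal 5 2 isT)))) | (by apply: (d_two finj fe (m := (@Ordinal 5 3 isT)))) | (by apply: (d_two finj fe (m := (@Ordinal 5 4 isT)))) | reflexivity | (rewrite (gdist_sym esym); reflexivity)].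
clearbody d03 d34.
have [Ed03|Ed03] : d03 = 2%N \/ d03 = 3%N by lia.
all: rewrite Ed03 in hT.
all: have [Ed34|Ed34] : d34 = 2%N \/ d34 = 3%N by lia.
all: rewrite Ed34 in hT.
- apply: (@gram_check R n 5 e f (fun i j => nth 0%N (nth [::] [:: [:: 0; 1; 2; 2; 1]; [:: 1; 0; 1; 2; 1]; [:: 2; 1; 0; 1; 2]; [:: 2; 2; 1; 0; 2]; [:: 1; 1; 2; 2; 0]] i) j) [:: 1%:R; 1%:R; 1%:R; 1%:R; 1%:R] [:: 0%:R; -1%:R; 1%:R; -1%:R; 0%:R] (c0 R) esym finj hT);
    by rewrite /G /c0 unlock /=; lra.
- apply: (@gram_check R n 5 e f (fun i j => nth 0%N (nth [::] [:: [:: 0; 1; 2; 2; 1]; [:: 1; 0; 1; 2; 1]; [:: 2; 1; 0; 1; 2]; [:: 2; 2; 1; 0; 3]; [:: 1; 1; 2; 3; 0]] i) j) [:: 1%:R; 1%:R; 1%:R; 1%:R; 1%:R] [:: 1%:R; -1%:R; 1%:R; -1%:R; 0%:R] (c0 R) esym finj hT);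
    by rewrite /G /c0 unlock /=; lra.
- apply: (@gram_check R n 5 e f (fun i j => nth 0%N (nth [::] [:: [:: 0; 1; 2; 3; 1]; [:: 1; 0; 1; 2; 1]; [:: 2; 1; 0; 1; 2]; [:: 3; 2; 1; 0; 2]; [:: 1; 1; 2; 2; 0]] i) j) [:: 1%:R; 1%:R; 1%:R; 1%:R; 1%:R] [:: 0%:R; -1%:R; 1%:R; -1%:R; 1%:R] (c0 R) esym finj hT);
    by rewrite /G /c0 unlock /=; lra.
- apply: (@gram_check R n 5 e f (fun i j => nth 0%N (nth [::] [:: [:: 0; 1; 2; 3; 1]; [:: 1; 0; 1; 2; 1]; [:: 2; 1; 0; 1; 2]; [:: 3; 2; 1; 0; 3]; [:: 1; 1; 2; 3; 0]] i) j) [:: 46%:R; 34%:R; 39%:R; 55%:R; 46%:R] [:: 15%:R; -69%:R; 63%:R; -27%:R; 15%:R] (c0 R) esym finj hT);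
    by rewrite /G /c0 unlock /=; lra.
Qed.

Lemma c_bound (R : rcfType) : (17 - Num.sqrt 329) / 2 <= c0 R.
Proof.
have h0 : 0 <= Num.sqrt (329 : R) := sqrtr_ge0 _.
have h1 : Num.sqrt (329 : R) ^+ 2 = 329 by rewrite sqr_sqrtr // ler0n.
rewrite /c0; nra.
Qed.

Unset Implicit Arguments.

Theorem lemma2p5 (R : rcfType) (n : nat) (e : rel 'I_n) :
  simple_graph e -> connected_graph e ->
  lambda (dist_mx R e) 2 <= (17 - Num.sqrt 329) / 2 ->
  ~ induced_sub e C4 /\ ~ induced_sub e C5 /\ ~ induced_sub e P5 /\
  ~ induced_sub e H1 /\ ~ induced_sub e H2 /\ ~ induced_sub e H3.
Proof.
move=> [esym eirr] _ hl.
have F : forall P : Prop, (P -> c0 R < lambda (dist_mx R e) 2) -> ~ P.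
  by move=> P hP p; have := hP p; rewrite ltNge (le_trans hl (c_bound R)).
split; first exact: F (@no_C4 R n e esym eirr).
split; first exact: F (@no_C5 R n e esym eirr).
split; first exact: F (@no_P5 R n e esym eirr).
split; first exact: F (@no_H1 R n e esym eirr).
split; first exact: F (@no_H2 R n e esym eirr).
exact: F (@no_H3 R n e esym eirr).
Qed.
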